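(* Fix an integer blocklength $m\ge 1$, a message size $N_c>0$ (bits), an information leakage level $\delta\in(0,1/2)$, and set $\mu=Q^{-1}(\delta)$, where $Q(y)=\frac{1}{\sqrt{2\pi}}\int_y^\infty e^{-t^2/2}\,dt$. Let $V(y)=(\log_2 e)^2\left(1-(1+y)^{-2}\right)$ for $y\ge 0$. Fix constants $a_C\in(0,1)$, $\varrho_E^2\ge 0$, $P>0$, $\sigma^2>0$, and $G_E>0$ (the path-loss factor $G_E=(d_{SR_2}d_{R_2E})^{-\alpha}$). For $x\ge 0$ (representing the squared optimal eavesdropper channel amplitude $|\gamma_O^{(E)}|^2$) define $$\gamma_{E,C}(x)=\frac{a_C P G_E\, x}{\varrho_E^2 P G_E\, x+\sigma^2},\qquad \tilde\beta(x)=(1+\gamma_{E,C}(x))\exp\!\left(\left(\frac{\mu V^{1/2}(\gamma_{E,C}(x))}{\sqrt m}+\frac{N_c}{m}\right)\ln 2\right)-1.$$ Then $\tilde\beta$ is a monotonically increasing function of $x=|\gamma_O^{(E)}|^2$ on $[0,\infty)$.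
   Context: $\tilde\beta$ is the security threshold of the finite-blocklength secure block error rate approximation; $\gamma_{E,C}$ is the SNR at an eavesdropper (with hardware impairment level $\varrho_E^2$) for decoding the central user's message after ideal removal of its own signal. *)

(* Defs.v *)
From Stdlib Require Import Reals.
From Coquelicot Require Import Coquelicot.
Open Scope R_scope.

Definition Qfun (y : R) : R :=
  / sqrt (2 * PI) *
  RInt_gen (fun t : R => exp (- t ^ 2 / 2)) (at_point y) (Rbar_locally p_infty).

Definition log2e : R := / ln 2.
Definition Vdisp (y : R) : R := log2e ^ 2 * (1 - / (1 + y) ^ 2).

Definition gammaEC (aC rhoE2 P sigma2 GE x : R) : R :=
  aC * P * GE * x / (rhoE2 * P * GE * x + sigma2).

Definition beta_tilde (m : nat) (Nc mu aC rhoE2 P sigma2 GE x : R) : R :=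
  let g := gammaEC aC rhoE2 P sigma2 GE x in
  (1 + g) * exp ((mu * sqrt (Vdisp g) / sqrt (INR m) + Nc / INR m) * ln 2) - 1.

(* Main.v *)
Require Import Defs.
From Stdlib Require Import Reals.
From Coquelicot Require Import Coquelicot.
Open Scope R_scope.
From Stdlib Require Import Lra Lia.

Definition gF (b : R) := RInt (fun t => exp (- t^2)) 0 b.

Lemma gcont z : continuous (fun t => exp (- t^2)) z.
Proof. apply (@ex_derive_continuous R_AbsRing R_NormedModule). auto_derive. auto. Qed.

Lemma gF_deriv x : derivable_pt_lim gF x (exp (- x^2)).
Proof.
apply is_derive_Reals. unfold gF.
apply (@is_derive_RInt R_NormedModule (fun t => exp (- t^2)) (fun b => RInt (fun t => exp (- t^2)) 0 b) 0).
- exists (mkposreal 1 Rlt_0_1). intros y _. apply (@RInt_correct R_CompleteNormedModule).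
  apply ex_RInt_continuous. intros z _. apply gcont.
- apply gcont.
Qed.

Lemma gF_cont x : continuity_pt gF x.
Proof.
apply derivable_continuous_pt. exists (exp (- x^2)). apply gF_deriv.
Qed.

Lemma gF0 : gF 0 = 0.
Proof. unfold gF. apply (@RInt_point R_CompleteNormedModule). Qed.

From HB Require Import structures.
From mathcomp Require all_boot all_order all_algebra.
From mathcomp Require all_classical all_reals all_analysis.
From mathcomp Require Rstruct Rstruct_topology.
Module MC.
Import all_boot all_order all_algebra all_classical all_reals all_analysis Rstruct Rstruct_topology.
Import numFieldNormedType.Exports.
Import Order.TTheory GRing.Theory Num.Theory.
Import numFieldNormedType.Exports.
Local Open Scope classical_set_scope.
Local Open Scope ring_scope.
Local Notation RT := (Rdefinitions.R : realType).

Lemma RcosE (x : R) : Rtrigo_def.cos x = trigo.cos x.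
Proof.
rewrite /Rtrigo_def.cos; case: exist_cos => y.
rewrite /cos_in /infinite_sum => H.
suff h2 : series (cos_coeff' x) @ \oo --> y.
  exact: (cvg_unique _ h2 (@cvg_cos_coeff' _ x)).

rewrite -cvg_shiftS /=; apply/(@cvgrPdist_lt _ R^o) => /= e /RltP /H[N Nub].
near=> n.
have nN : (n >= N)%coq_nat by apply/ssrnat.leP; near: n; exact: nbhs_infty_ge.
move: Nub => /(_ _ nN) /[!RdistE] /RltP /=.
rewrite distrC sum_f_R0E; congr (`| _ - _ | < e).
apply: eq_bigr=> k _; rewrite /cos_n /cos_coeff'.
rewrite /Rdiv RinvE !RpowE factE INRE /Rsqr.
have -> : (2 * k)%coq_nat = k.*2 by rewrite -mul2n.
have -> : (x*x)%coqR = x^+2 by rewrite expr2.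
rewrite -exprM mul2n.
rewrite [RHS]mulrAC; congr (_ * _ * _).
Unshelve. all: by end_near. Qed.

Lemma R2E : (2%:R : R) = IZR 2.
Proof. by rewrite IZRposE INRE. Qed.

Lemma RPIE : PI = pi.
Proof.
have h : PI / 2 = pi / 2.
  have [p1 p2] := @pihalf_02_cos_pihalf R.
  apply: cos_02_uniq => //.
  - have h1 := PI_RGT_0; have h2 := PI_4.
    apply/andP; split; apply/RleP; rewrite -RdivE R2E -?R0E; lra.
  - by rewrite -RdivE R2E -RcosE cos_PI2.
have -> : PI = (PI / 2) * 2 by rewrite mulrC mulrCA mulfV ?mulr1.
by rewrite h mulrC mulrCA mulfV ?mulr1.
Qed.

Lemma is_derive_Rlim (f : RT -> RT) (x l : RT) :
  derivable_pt_lim f x l -> is_derive x 1 f l.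
Proof.
move=> H.
have c : (fun h : RT => h^-1 *: ((f \o shift x) (h *: 1) - f x)) @ 0^' --> l.
  apply/cvgrPdist_lt => e /RltP e0.
  have [d Hd] := H e e0.
  exists (pos d) => /=.
    by apply/RltP; apply: cond_pos.
  move=> h hd hneq0.
  have hn : h <> 0%coqR by apply/eqP.
  have hl : (Rabs h < d)%coqR.
    by apply/RltP; rewrite RabsE; move: hd; rewrite /ball_ /= sub0r normrN.
  move: (Hd h hn hl) => /RltP; rewrite RabsE distrC.
  suff -> : h^-1 *: (f (h%:A + x) - f x) = ((f (x+h) - f x)/h)%coqR by [].
  rewrite /Rdiv.
  change (h^-1 * (f (h * 1 + x) - f x) = (f (x + h) - f x) * h^-1).
  by rewrite mulr1 [h + x]addrC mulrC.
apply: DeriveDef.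
  by apply/cvg_ex; exists l.
exact: cvg_lim.
Qed.

Lemma gauss_funE (x : RT) : gauss_fun x = exp (- x^2)%coqR.
Proof. by rewrite /gauss_fun RexpE RpowE. Qed.

Lemma gF_is_derive (x : RT) : is_derive x 1 (gF : RT -> RT) (gauss_fun x).
Proof. by apply: is_derive_Rlim; rewrite gauss_funE; apply: gF_deriv. Qed.

Lemma gF_continuous (x : RT) : {for x, continuous (gF : RT -> RT)}.
Proof. by apply/continuity_pt_cvg; apply: gF_cont. Qed.

Lemma integral0_gauss_gF (b : RT) : 0 < b -> gauss_integral_proof.integral0_gauss b = gF b.
Proof.
move=> b0.
rewrite /gauss_integral_proof.integral0_gauss /Rintegral (@continuous_FTC2 RT gauss_fun gF 0 b b0).
- by rewrite gF0 /= subr0.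
- by apply: continuous_subspaceT; exact: continuous_gauss_fun.
- split.
  + by move=> x _; have [] := gF_is_derive x.
  + by apply: cvg_at_right_filter; apply: gF_continuous.
  + by apply: cvg_at_left_filter; apply: gF_continuous.
- move=> x _; rewrite derive1E; by have [] := gF_is_derive x.
Qed.

Lemma cvg_Ig : gauss_integral_proof.integral0_gauss x @[x --> +oo] --> Num.sqrt (pi : RT) / 2.
Proof.
  have : Num.sqrt (@gauss_integral_proof.integral0_gauss RT x ^+ 2) @[x --> +oo]
      --> Num.sqrt (pi / 4).
    apply: continuous_cvg => //;
      [exact: sqrt_continuous|exact: gauss_integral_proof.cvg_integral0_gauss_sqr].
  rewrite sqrtrM ?pi_ge0// sqrtrV// (_ : 4 = 2 ^+ 2); last first.
    by rewrite expr2 -natrM.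
  rewrite sqrtr_sqr ger0_norm//.
  rewrite (_ : (fun _ => Num.sqrt _) = gauss_integral_proof.integral0_gauss)//.
  apply/funext => r; rewrite sqrtr_sqr// ger0_norm//.
  exact: gauss_integral_proof.integral0_gauss_ge0.
Qed.

Lemma gF_lim (e : R) : (0 < e)%coqR -> exists M : R, forall b : R, (M < b)%coqR ->
  (Rabs (gF b - sqrt PI / 2) < e)%coqR.
Proof.
move=> /RltP e0.
have := cvg_Ig; move/cvgrPdist_lt => /(_ e e0) [M [Mreal HM]].
exists (Num.max M 0) => b /RltP; rewrite gt_max => /andP[bM b0].
have := HM b bM; rewrite integral0_gauss_gF // => h.
apply/RltP; rewrite RabsE distrC RsqrtE RPIE RdivE -R2E.
exact: h.
Qed.
End MC.

Definition fQ (t : R) := exp (- t ^ 2 / 2).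

Lemma fQ_cont z : continuous fQ z.
Proof. unfold fQ. apply (@ex_derive_continuous R_AbsRing R_NormedModule). auto_derive. auto. Qed.

Lemma fQ_ex a b : ex_RInt fQ a b.
Proof. apply (@ex_RInt_continuous R_CompleteNormedModule). intros; apply fQ_cont. Qed.

Lemma gcont' z : continuous (fun t => exp (- t^2)) z.
Proof. apply (@ex_derive_continuous R_AbsRing R_NormedModule). auto_derive. auto. Qed.

Lemma RInt_fQ c : RInt fQ 0 c = sqrt 2 * gF (c / sqrt 2).
Proof.
assert (s2 : 0 < sqrt 2) by (apply sqrt_lt_R0; lra).
unfold gF.
assert (H := @RInt_comp_lin R_CompleteNormedModule (fun t => exp(-t^2)) (/ sqrt 2) 0 0 c).
replace (/ sqrt 2 * 0 + 0) with 0 in H by ring.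
replace (/ sqrt 2 * c + 0) with (c / sqrt 2) in H by (unfold Rdiv; ring).
rewrite <- H.
2: { apply (@ex_RInt_continuous R_CompleteNormedModule). intros; apply gcont'. }
rewrite (@RInt_scal R_CompleteNormedModule).
2: { apply (@ex_RInt_continuous R_CompleteNormedModule). intros. apply (@ex_derive_continuous R_AbsRing R_NormedModule). auto_derive. auto. }
unfold scal; simpl; unfold mult; simpl.
rewrite <- Rmult_assoc, Rinv_r, Rmult_1_l by lra.
apply RInt_ext. intros x _. unfold fQ. f_equal.
field_simplify. 2: lra. rewrite pow2_sqrt by lra. reflexivity.
Qed.

Lemma fQ_lim (e : R) : 0 < e -> exists M : R, forall c : R, M < c ->
  Rabs (RInt fQ 0 c - sqrt (2 * PI) / 2) < e.
Proof.
intros e0.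
assert (s2 : 0 < sqrt 2) by (apply sqrt_lt_R0; lra).
destruct (MC.gF_lim (e / sqrt 2)) as [M HM].
{ apply Rdiv_lt_0_compat; lra. }
exists (sqrt 2 * M). intros c Hc.
rewrite RInt_fQ, sqrt_mult by (try lra; left; apply PI_RGT_0).
assert (Hm : M < c / sqrt 2).
{ apply (Rmult_lt_reg_l (sqrt 2)); auto. field_simplify; lra. }
specialize (HM _ Hm).
replace (sqrt 2 * gF (c / sqrt 2) - sqrt 2 * sqrt PI / 2) with
  (sqrt 2 * (gF (c / sqrt 2) - sqrt PI / 2)) by field.
rewrite Rabs_mult, Rabs_pos_eq by lra.
apply (Rmult_lt_reg_l (/ sqrt 2)). apply Rinv_0_lt_compat; lra.
rewrite <- Rmult_assoc, Rinv_l, Rmult_1_l by lra.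
unfold Rdiv in HM. rewrite Rmult_comm. exact HM.
Qed.

Lemma fQ_gen : is_RInt_gen fQ (at_point 0) (Rbar_locally p_infty) (sqrt (2 * PI) / 2).
Proof.
intros P [eps HP].
destruct (fQ_lim eps (cond_pos eps)) as [M HM].
apply Filter_prod with (Q := fun x => x = 0) (R := fun b => M < b).
- reflexivity.
- exists M. auto.
- intros x y -> Hy. simpl. exists (RInt fQ 0 y). split.
  + apply (@RInt_correct R_CompleteNormedModule). apply fQ_ex.
  + apply HP. apply HM. exact Hy.
Qed.

Lemma Qfun_nonpos mu : mu <= 0 -> 1 / 2 <= / sqrt (2 * PI) *
  RInt_gen (fun t : R => exp (- t ^ 2 / 2)) (at_point mu) (Rbar_locally p_infty).
Proof.
intros Hmu.
assert (H1 : is_RInt_gen fQ (at_point mu) (at_point 0) (RInt fQ mu 0)).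
{ apply is_RInt_gen_at_point. apply (@RInt_correct R_CompleteNormedModule). apply fQ_ex. }
assert (H2 := is_RInt_gen_Chasles _ _ _ _ H1 fQ_gen).
change (fun t : R => exp (- t ^ 2 / 2)) with fQ.
rewrite (is_RInt_gen_unique _ _ H2).
assert (HI : 0 <= RInt fQ mu 0).
{ apply RInt_ge_0; auto. apply fQ_ex. intros; unfold fQ; left; apply exp_pos. }
assert (sp : 0 < sqrt (2 * PI)).
{ apply sqrt_lt_R0. assert (h := PI_RGT_0). lra. }
unfold plus; simpl.
apply (Rmult_le_reg_l (sqrt (2 * PI))); auto.
rewrite <- Rmult_assoc, Rinv_r, Rmult_1_l by lra. lra.
Qed.

Lemma exp_le_mono a b : a <= b -> exp a <= exp b.
Proof.
intros h. destruct (Rle_lt_or_eq_dec a b h) as [h1|h1].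
- left. apply exp_increasing. exact h1.
- rewrite h1. right. reflexivity.
Qed.

Lemma gammaEC_mono aC rhoE2 P sigma2 GE x y :
  0 < aC -> 0 <= rhoE2 -> 0 < P -> 0 < sigma2 -> 0 < GE -> 0 <= x -> x < y ->
  0 <= gammaEC aC rhoE2 P sigma2 GE x /\ gammaEC aC rhoE2 P sigma2 GE x < gammaEC aC rhoE2 P sigma2 GE y.
Proof.
intros ha hr hp hs hg hx hxy. unfold gammaEC.
assert (hA : 0 < aC * P * GE) by (repeat apply Rmult_lt_0_compat; auto).
assert (hB : 0 <= rhoE2 * P * GE).
{ apply Rmult_le_pos; [apply Rmult_le_pos|]; lra. }
assert (dx : 0 < rhoE2 * P * GE * x + sigma2).
{ assert (0 <= rhoE2 * P * GE * x) by (apply Rmult_le_pos; lra). lra. }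
assert (dy : 0 < rhoE2 * P * GE * y + sigma2).
{ assert (0 <= rhoE2 * P * GE * y) by (apply Rmult_le_pos; lra). lra. }
split.
- assert (0 <= aC * P * GE * x) by (apply Rmult_le_pos; [left; exact hA|exact hx]).
  unfold Rdiv. apply Rmult_le_pos; [lra|left; apply Rinv_0_lt_compat; lra].
- apply (Rmult_lt_reg_r (rhoE2 * P * GE * x + sigma2)); auto.
  apply (Rmult_lt_reg_r (rhoE2 * P * GE * y + sigma2)); auto.
  field_simplify; try lra.
  set (A := aC * P * GE) in *. set (B := rhoE2 * P * GE) in *.
  replace (aC * P * GE * x * rhoE2 * y * P * GE) with (A * B * x * y) by (unfold A, B; ring).
  replace (aC * P * GE * rhoE2 * P * GE * y * x) with (A * B * x * y) by (unfold A, B; ring).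
  replace (aC * P * GE * x * sigma2) with (A * sigma2 * x) by (unfold A; ring).
  replace (aC * P * GE * y * sigma2) with (A * sigma2 * y) by (unfold A; ring).
  assert (A * sigma2 * x < A * sigma2 * y).
  { apply Rmult_lt_compat_l; [apply Rmult_lt_0_compat|]; lra. }
  lra.
Qed.

Theorem proposition1 (m : nat) (Nc delta mu aC rhoE2 P sigma2 GE : R) :
  (1 <= m)%nat -> 0 < Nc -> 0 < delta < 1 / 2 -> Qfun mu = delta ->
  0 < aC < 1 -> 0 <= rhoE2 -> 0 < P -> 0 < sigma2 -> 0 < GE ->
  forall x y : R, 0 <= x -> x < y ->
    beta_tilde m Nc mu aC rhoE2 P sigma2 GE x <
    beta_tilde m Nc mu aC rhoE2 P sigma2 GE y.
Proof.
intros Hm HNc Hd HQ HaC Hr HP Hs HG x y Hx Hxy.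
assert (mu0 : 0 <= mu).
{ destruct (Rle_or_lt mu 0) as [h|h]; [|lra].
  assert (h2 := Qfun_nonpos mu h). unfold Qfun in HQ. lra. }
destruct (gammaEC_mono aC rhoE2 P sigma2 GE x y) as [g0 gxy]; try lra.
unfold beta_tilde; cbv zeta.
set (gx := gammaEC aC rhoE2 P sigma2 GE x) in *.
set (gy := gammaEC aC rhoE2 P sigma2 GE y) in *.
assert (Hmpos : 0 < INR m) by (apply lt_0_INR; lia).
assert (sm : 0 < sqrt (INR m)) by (apply sqrt_lt_R0; lra).
assert (HV : Vdisp gx <= Vdisp gy).
{ unfold Vdisp. apply Rmult_le_compat_l. apply pow2_ge_0.
  assert (/ (1 + gy) ^ 2 <= / (1 + gx) ^ 2).
  { apply Rinv_le_contravar. apply pow_lt; lra.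
    apply pow_incr; lra. }
  lra. }
assert (HE : exp ((mu * sqrt (Vdisp gx) / sqrt (INR m) + Nc / INR m) * ln 2) <=
             exp ((mu * sqrt (Vdisp gy) / sqrt (INR m) + Nc / INR m) * ln 2)).
{ apply exp_le_mono. apply Rmult_le_compat_r.
  - left. apply ln_lt_2 || (rewrite <- ln_1; apply ln_increasing; lra).
  - apply Rplus_le_compat_r. unfold Rdiv. apply Rmult_le_compat_r.
    + left; apply Rinv_0_lt_compat; lra.
    + apply Rmult_le_compat_l; auto. apply sqrt_le_1_alt; auto. }
set (Ex := exp ((mu * sqrt (Vdisp gx) / sqrt (INR m) + Nc / INR m) * ln 2)) in *.
set (Ey := exp ((mu * sqrt (Vdisp gy) / sqrt (INR m) + Nc / INR m) * ln 2)) in *.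
assert (Ex0 : 0 < Ex) by apply exp_pos.
assert ((1 + gx) * Ex < (1 + gy) * Ex) by (apply Rmult_lt_compat_r; lra).
assert ((1 + gy) * Ex <= (1 + gy) * Ey) by (apply Rmult_le_compat_l; lra).
lra.
Qed.
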